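(* Let $C$ be a Reedy category. The quotient functor $q\colon\int N^{-,+}(C)\to\mathrm{Down}_*(C)$ exhibits $\mathrm{Down}_*(C)$ as the strict 1-localization of $\int N^{-,+}(C)$ at the set $W$ of morphisms of the form $(\sigma,\mathrm{id}_{X\circ\sigma})\colon([m],X\circ\sigma)\to([n],X)$ with $([n],X)$ an object and $\sigma\colon[m]\to[n]$ surjective. That is, $q$ sends every morphism in $W$ to an isomorphism, and every functor $G\colon\int N^{-,+}(C)\to E$ sending all morphisms of $W$ to isomorphisms factors as $G=H\circ q$ for a unique functor $H\colon\mathrm{Down}_*(C)\to E$.
   Context: A Reedy category $(C,C_-,C_+)$: wide subcategories with unique factorization of every morphism as ($C_-$ then $C_+$), membership in $C_\pm$ decidable, and the relation ($x<'y$ iff non-identity $x\to y$ in $C_+$ or non-identity $y\to x$ in $C_-$) well-founded. $\Delta$: finite ordinals $[n]$ and order-preserving maps. $\int N^{-,+}(C)$: objects $([n],X)$ with $X\colon[n]\to C$ a functor sending all morphisms into $C_-$; morphisms $([m],X)\to([n],Y)$ are $(\alpha,\theta)$ with $\alpha\colon[m]\to[n]$ in $\Delta$ and $\theta\colon X\Rightarrow Y\circ\alpha$ with all components in $C_+$; composition $(\beta,\varphi)\circ(\alpha,\theta)=(\beta\alpha,(\varphi\alpha)\circ\theta)$. Order on hom-sets: $(\alpha,\theta)\le(\alpha',\theta')$ iff $\alpha\le\alpha'$ pointwise and $\theta'_i=Y(\alpha(i)\le\alpha'(i))\circ\theta_i$ for all $i$ (compatible with composition). $\mathrm{Down}_*(C)$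 has the same objects as $\int N^{-,+}(C)$ and hom-sets the quotients by the equivalence relation generated by $\le$; $q$ is the identity on objects and the quotient map on morphisms. *)

(* Defs.v *)
From Stdlib Require Import ClassicalEpsilon Relation_Operators.
From mathcomp Require Import all_boot.

Set Implicit Arguments.
Unset Strict Implicit.
Unset Printing Implicit Defensive.

Record Cat := {
  ob :> Type;
  hom : ob -> ob -> Type;
  idm : forall x, hom x x;
  cmp : forall x y z, hom y z -> hom x y -> hom x z }.
Arguments hom {c}.
Arguments idm {c} x.
Arguments cmp {c x y z}.

Definition is_category (C : Cat) : Prop :=
  (forall (x y : C) (f : hom x y), cmp (idm y) f = f) /\
  (forall (x y : C) (f : hom x y), cmp f (idm x) = f) /\
  (forall (x y z w : C) (f : hom x y) (g : hom y z) (h : hom z w),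
      cmp h (cmp g f) = cmp (cmp h g) f).

Definition arrow (C : Cat) := {x : C & {y : C & hom x y}}.
Definition arr (C : Cat) (x y : C) (f : hom x y) : arrow C :=
  existT _ x (existT _ y f).

Definition is_iso (C : Cat) (x y : C) (f : hom x y) : Prop :=
  exists g : hom y x, cmp g f = idm x /\ cmp f g = idm y.

Record Functor (C D : Cat) := {
  fob :> C -> D;
  fmap : forall x y : C, hom x y -> hom (fob x) (fob y) }.
Arguments fmap {C D} f {x y} : rename.

Definition is_functor (C D : Cat) (F : Functor C D) : Prop :=
  (forall x : C, fmap F (idm x) = idm (F x)) /\
  (forall (x y z : C) (g : hom y z) (f : hom x y),
      fmap F (cmp g f) = cmp (fmap F g) (fmap F f)).

Definition fcomp (C D E : Cat) (G : Functor D E) (F : Functor C D) : Functor C E :=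
  {| fob := fun x => G (F x); fmap := fun x y f => fmap G (fmap F f) |}.

(* strict equality of functors: same action on every arrow (incl. source/target) *)
Definition functor_eq (C D : Cat) (F G : Functor C D) : Prop :=
  forall (x y : C) (f : hom x y), arr (fmap F f) = arr (fmap G f).

Definition reedy_lt (C : Cat) (m p : forall x y : C, hom x y -> bool) (x y : C) : Prop :=
  (exists f : hom x y, p x y f /\ arr f <> arr (idm x)) \/
  (exists f : hom y x, m y x f /\ arr f <> arr (idm y)).

Record Reedy := {
  RC :> Cat;
  RC_cat : is_category RC;
  Rminus : forall x y : RC, hom x y -> bool;
  Rplus : forall x y : RC, hom x y -> bool;
  Rminus_id : forall x : RC, Rminus (idm x);
  Rminus_cmp : forall (x y z : RC) (g : hom y z) (f : hom x y),
      Rminus g -> Rminus f -> Rminus (cmp g f);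
  Rplus_id : forall x : RC, Rplus (idm x);
  Rplus_cmp : forall (x y z : RC) (g : hom y z) (f : hom x y),
      Rplus g -> Rplus f -> Rplus (cmp g f);
  Rfact_ex : forall (x z : RC) (f : hom x z),
      exists (y : RC) (g : hom x y) (h : hom y z),
        Rminus g /\ Rplus h /\ cmp h g = f;
  Rfact_uniq : forall (x z : RC) (f : hom x z)
      (y : RC) (g : hom x y) (h : hom y z) (y' : RC) (g' : hom x y') (h' : hom y' z),
      Rminus g -> Rplus h -> cmp h g = f ->
      Rminus g' -> Rplus h' -> cmp h' g' = f ->
      existT (fun y => (hom x y * hom y z)%type) y (g, h) =
      existT (fun y => (hom x y * hom y z)%type) y' (g', h');
  Rwf : well_founded (reedy_lt Rminus Rplus) }.
Arguments Rminus {r x y}.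
Arguments Rplus {r x y}.

(* ---------- Delta: maps [m] -> [n], [n] = 'I_n.+1 ---------- *)
Definition dmap (m n : nat) :=
  {f : 'I_m.+1 -> 'I_n.+1 | forall i j : 'I_m.+1, i <= j -> f i <= f j}.
Definition dmap_mono (m n : nat) (a : dmap m n) (i j : 'I_m.+1) (h : i <= j)
  : sval a i <= sval a j := proj2_sig a i j h.
Definition dmap_id (n : nat) : dmap n n :=
  exist (fun f : 'I_n.+1 -> 'I_n.+1 => forall i j : 'I__, i <= j -> f i <= f j)
        (fun i => i) (fun i j h => h).
Definition dmap_comp (l m n : nat) (b : dmap m n) (a : dmap l m) : dmap l n :=
  exist (fun f : 'I_l.+1 -> 'I_n.+1 => forall i j : 'I__, i <= j -> f i <= f j)
        (fun i => sval b (sval a i)) (fun i j h => dmap_mono b (dmap_mono a h)).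
Definition dsurj (m n : nat) (a : dmap m n) : Prop :=
  forall j : 'I_n.+1, exists i : 'I_m.+1, sval a i = j.

Section IntN.
Variable R : Reedy.

(* objects ([n], X) with X : [n] -> C a functor landing in C_- *)
Record NObj := {
  ndim : nat;
  nX : 'I_ndim.+1 -> R;
  nXm : forall i j : 'I_ndim.+1, i <= j -> hom (nX i) (nX j);
  nX_id : forall (i : 'I_ndim.+1) (h : i <= i), nXm h = idm (nX i);
  nX_cmp : forall (i j k : 'I_ndim.+1) (h1 : i <= j) (h2 : j <= k) (h3 : i <= k),
      cmp (nXm h2) (nXm h1) = nXm h3;
  nX_minus : forall (i j : 'I_ndim.+1) (h : i <= j), Rminus (nXm h) }.
Arguments nXm n {i j}.
Arguments nX n i : clear implicits.
Arguments ndim n : clear implicits.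

(* morphisms (alpha, theta) with theta : X => Y o alpha, components in C_+ *)
Record NHom (a b : NObj) := {
  nal : dmap (ndim a) (ndim b);
  nth_ : forall i : 'I_(ndim a).+1, hom (nX a i) (nX b (sval nal i));
  nth_plus : forall i, Rplus (nth_ i);
  nth_nat : forall (i j : 'I_(ndim a).+1) (h : i <= j),
      cmp (nXm b (dmap_mono nal h)) (nth_ i) = cmp (nth_ j) (nXm a h) }.
Arguments nal {a b} n.
Arguments nth_ {a b} n i.

Let hC := RC_cat R.

Definition nid (a : NObj) : NHom a a.
Proof.
refine {| nal := dmap_id (ndim a);
          nth_ := fun i => idm (nX a i) |}.
- move=> i; exact: Rplus_id.
- move=> i j h /=. case: hC => [l [r _]]. by rewrite l r.
Defined.

Definition ncomp (a b c : NObj) (g : NHom b c) (f : NHom a b) : NHom a c.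
Proof.
refine {| nal := dmap_comp (nal g) (nal f);
          nth_ := fun i => cmp (nth_ g (sval (nal f) i)) (nth_ f i) |}.
- move=> i; apply: Rplus_cmp; [exact: nth_plus | exact: nth_plus].
- move=> i j h /=. case: hC => [_ [_ hA]].
  rewrite hA (nth_nat g (dmap_mono (nal f) h)) -hA (nth_nat f h) hA //.
Defined.

Definition intN : Cat :=
  {| ob := NObj; hom := NHom; idm := nid; cmp := fun a b c g f => ncomp g f |}.

Definition nle (a b : NObj) (f f' : NHom a b) : Prop :=
  exists H : forall i, sval (nal f) i <= sval (nal f') i,
    forall i, nth_ f' i = cmp (nXm b (H i)) (nth_ f i).

Definition ncls (a b : NObj) (f : NHom a b) : NHom a b -> Prop :=
  fun g => clos_refl_sym_trans _ (@nle a b) f g.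

Definition DHom (a b : NObj) := {S : NHom a b -> Prop | exists f, S = ncls f}.
Definition dclass (a b : NObj) (f : NHom a b) : DHom a b :=
  exist _ (ncls f) (ex_intro _ f erefl).
Definition drep (a b : NObj) (S : DHom a b) : NHom a b :=
  proj1_sig (constructive_indefinite_description _ (proj2_sig S)).

Definition Down : Cat :=
  {| ob := NObj; hom := DHom;
     idm := fun a => dclass (nid a);
     cmp := fun a b c T S => dclass (ncomp (drep T) (drep S)) |}.

Definition qfun : Functor intN Down :=
  @Build_Functor intN Down (fun a : NObj => a) (fun (a b : NObj) (f : NHom a b) => dclass f).

Definition restr (b : NObj) (m : nat) (s : dmap m (ndim b)) : NObj.
Proof.
refine {| ndim := m; nX := fun i => nX b (sval s i);
          nXm := fun i j h => nXm b (dmap_mono s h) |}.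
- move=> i h; exact: nX_id.
- move=> i j k h1 h2 h3; exact: nX_cmp.
- move=> i j h; exact: nX_minus.
Defined.

Definition Wmor (b : NObj) (m : nat) (s : dmap m (ndim b)) : NHom (restr s) b.
Proof.
refine (@Build_NHom (restr s) b s (fun i => idm (nX b (sval s i))) _ _).
- move=> i; exact: Rplus_id.
- move=> i j h /=. case: hC => [l [r _]]. by rewrite l r.
Defined.

End IntN.

Definition inverts_W (R : Reedy) (E : Cat) (F : Functor (intN R) E) : Prop :=
  forall (b : NObj R) (m : nat) (s : dmap m (ndim b)),
    dsurj s -> is_iso (fmap F (Wmor s)).

(* Main.v *)
Require Import Defs.
From Stdlib Require Import ClassicalEpsilon Relation_Operators ProofIrrelevance FunctionalExtensionality PropExtensionality.
From mathcomp Require Import all_boot zify.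
Set Implicit Arguments. Unset Strict Implicit. Unset Printing Implicit Defensive.

Section S.
Variable R : Reedy.
Let hC := RC_cat R.
Lemma cid_l (x y : R) (f : hom x y) : cmp (idm y) f = f.
Proof. by case: hC => l _; apply l. Qed.
Lemma cid_r (x y : R) (f : hom x y) : cmp f (idm x) = f.
Proof. by case: hC => _ [r _]; apply r. Qed.
Lemma cA (x y z w : R) (f : hom x y) (g : hom y z) (h : hom z w) :
  cmp h (cmp g f) = cmp (cmp h g) f.
Proof. by case: hC => _ [_ a]; apply a. Qed.

Lemma dmap_ext m n (a b : dmap m n) : sval a =1 sval b -> a = b.
Proof.
case: a b => [fa pa] [fb pb] /= e.
have ee := functional_extensionality _ _ e. subst fb.
f_equal; apply proof_irrelevance.
Qed.

Lemma arr_inj (C : Cat) (x y : C) (f g : hom x y) : arr f = arr g -> f = g.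
Proof. rewrite /arr => e. do 2 apply inj_pair2 in e. exact e. Qed.

Lemma NHom_ext (a b : NObj R) (f g : NHom a b) :
  (forall i, sval (nal f) i = sval (nal g) i) ->
  (forall i, arr (nth_ f i) = arr (nth_ g i)) -> f = g.
Proof.
case: f => al th thp thn; case: g => al' th' thp' thn' /= e1 e2.
have ee := dmap_ext e1. subst al'.
have et : th = th'.
  apply functional_extensionality_dep => i; apply arr_inj; exact: e2.
subst th'. f_equal; apply proof_irrelevance.
Qed.

Lemma nXm_pi (A : NObj R) (i j : 'I_(ndim A).+1) (p q : i <= j) : nXm p = nXm q.
Proof. by rewrite (bool_irrelevance p q). Qed.

Lemma nXm_c (A : NObj R) (i j k : 'I_(ndim A).+1) (h1 : i <= j) (h2 : j <= k) :
  cmp (nXm h2) (nXm h1) = nXm (leq_trans h1 h2).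
Proof. exact: nX_cmp. Qed.

Lemma nXm_same (A : NObj R) (i j : 'I_(ndim A).+1) (h : i <= j) :
  i = j -> arr (nXm h) = arr (idm (nX i)).
Proof. move=> e; subst j; by rewrite nX_id. Qed.

Lemma nXm_plus (A : NObj R) (i j : 'I_(ndim A).+1) (h : i <= j) :
  i = j -> Rplus (nXm h).
Proof. move=> e; subst j; rewrite nX_id; exact: Rplus_id. Qed.

Lemma nXm_arr (A : NObj R) (x : R) (i j j' : 'I_(ndim A).+1) (h : i <= j) (h' : i <= j')
  (g : hom x (nX i)) : j = j' -> arr (cmp (nXm h) g) = arr (cmp (nXm h') g).
Proof. move=> e; subst j'; by rewrite (nXm_pi h h'). Qed.

Lemma intN_cat : is_category (intN R).
Proof.
split; [|split].
- move=> x y f; apply: NHom_ext => //= i; by rewrite cid_l.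
- move=> x y f; apply: NHom_ext => //= i; by rewrite cid_r.
- move=> x y z w f g h; apply: NHom_ext => //= i; by rewrite cA.
Qed.

Lemma ncomp_id_l (a b : NObj R) (f : NHom a b) : ncomp (nid b) f = f.
Proof. by case: intN_cat => l _; apply: (l a b f). Qed.
Lemma ncomp_id_r (a b : NObj R) (f : NHom a b) : ncomp f (nid a) = f.
Proof. by case: intN_cat => _ [r _]; apply: (r a b f). Qed.
Lemma ncompA (a b c d : NObj R) (f : NHom a b) (g : NHom b c) (h : NHom c d) :
  ncomp h (ncomp g f) = ncomp (ncomp h g) f.
Proof. by case: intN_cat => _ [_ r]; apply: (r a b c d f g h). Qed.


Lemma nle_post (a b c : NObj R) (g : NHom b c) (f f' : NHom a b) :
  nle f f' -> nle (ncomp g f) (ncomp g f').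
Proof.
case=> H HH. exists (fun i => dmap_mono (nal g) (H i)) => i /=.
by rewrite HH cA -(nth_nat g (H i)) -cA.
Qed.

Lemma nle_pre (a b d : NObj R) (h : NHom d a) (f f' : NHom a b) :
  nle f f' -> nle (ncomp f h) (ncomp f' h).
Proof.
case=> H HH. exists (fun j => H (sval (nal h) j)) => j /=.
by rewrite HH cA.
Qed.

Lemma ncls_post (a b c : NObj R) (g : NHom b c) (f f' : NHom a b) :
  ncls f f' -> ncls (ncomp g f) (ncomp g f').
Proof.
elim=> [x y Hxy|x|x y _ IH|x y z _ IH1 _ IH2].
- apply: rst_step; exact: nle_post.
- exact: rst_refl.
- exact: rst_sym.
- exact: rst_trans IH1 IH2.
Qed.

Lemma ncls_pre (a b d : NObj R) (h : NHom d a) (f f' : NHom a b) :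
  ncls f f' -> ncls (ncomp f h) (ncomp f' h).
Proof.
elim=> [x y Hxy|x|x y _ IH|x y z _ IH1 _ IH2].
- apply: rst_step; exact: nle_pre.
- exact: rst_refl.
- exact: rst_sym.
- exact: rst_trans IH1 IH2.
Qed.

Lemma ncls_comp (a b c : NObj R) (g g' : NHom b c) (f f' : NHom a b) :
  ncls f f' -> ncls g g' -> ncls (ncomp g f) (ncomp g' f').
Proof.
move=> H1 H2; apply: rst_trans (ncls_post g H1) _; exact: ncls_pre.
Qed.

Lemma dclass_eq (a b : NObj R) (f g : NHom a b) : ncls f g -> dclass f = dclass g.
Proof.
move=> H.
have e : ncls f = ncls g.
  apply functional_extensionality => h; apply propositional_extensionality; split => K.
  - apply: rst_trans _ K; exact: rst_sym.
  - exact: rst_trans H K.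
rewrite /dclass. move: (ex_intro _ f _) (ex_intro _ g _). rewrite e => p q.
by rewrite (proof_irrelevance _ p q).
Qed.

Lemma drepK (a b : NObj R) (S : DHom a b) : dclass (drep S) = S.
Proof.
rewrite /drep /dclass. case: (constructive_indefinite_description _ _) => f /= e.
case: S e => S0 p /= e. subst S0. f_equal; apply proof_irrelevance.
Qed.

Lemma drep_dclass (a b : NObj R) (f : NHom a b) : ncls f (drep (dclass f)).
Proof.
rewrite /drep /dclass. case: (constructive_indefinite_description _ _) => g /= e.
rewrite e; exact: rst_refl.
Qed.

Lemma dcmp (a b c : NObj R) (g : NHom b c) (f : NHom a b) :
  @cmp (Down R) a b c (dclass g) (dclass f) = dclass (ncomp g f).
Proof.
apply: dclass_eq; apply: ncls_comp; apply: rst_sym; exact: drep_dclass.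
Qed.

Lemma Down_cat : is_category (Down R).
Proof.
split; [|split].
- move=> x y S; rewrite -(drepK S).
  have -> : (@idm (Down R) y) = dclass (nid y) by [].
  by rewrite dcmp ncomp_id_l.
- move=> x y S; rewrite -(drepK S).
  have -> : (@idm (Down R) x) = dclass (nid x) by [].
  by rewrite dcmp ncomp_id_r.
- move=> x y z w f g h; rewrite -(drepK f) -(drepK g) -(drepK h).
  by rewrite !dcmp ncompA.
Qed.

Lemma q_functor : is_functor (qfun R).
Proof. split => // x y z g f. rewrite /qfun /fmap. symmetry; exact: dcmp. Qed.


Section Sec.
Variables (A : NObj R) (p : nat) (s : dmap p (ndim A)) (d : dmap (ndim A) p).
Hypothesis hsd : forall i, sval s (sval d i) = i.

Lemma hsd_le (i : 'I_(ndim A).+1) : i <= sval s (sval d i).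
Proof. by rewrite hsd. Qed.

Definition Sec : NHom A (restr s).
Proof.
refine (@Build_NHom R A (restr s) d (fun i => nXm (hsd_le i)) _ _).
- move=> i; apply: nXm_plus; by rewrite hsd.
- move=> i j h /=. rewrite !nXm_c; exact: nXm_pi.
Defined.

Lemma W_Sec : ncomp (Wmor s) Sec = nid A.
Proof.
apply: NHom_ext => //= i. rewrite cid_l; apply: nXm_same; by rewrite hsd.
Qed.

End Sec.

Lemma surj_section m n (sg : dmap m n) : dsurj sg ->
  exists d : dmap n m, (forall j, sval sg (sval d j) = j) /\
                       (forall i, sval d (sval sg i) <= i).
Proof.
move=> hs.
have exP : forall j : 'I_n.+1, exists k, (k < m.+1) && (sval sg (inord k) == j).
  move=> j; case: (hs j) => i <-; exists i; by rewrite ltn_ord inord_val eqxx.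
pose dl := fun j => (inord (ex_minn (exP j)) : 'I_m.+1).
have P1 : forall j, sval sg (dl j) = j.
  move=> j; rewrite /dl; case: ex_minnP => k /andP[_ /eqP] //.
have P2 : forall i, dl (sval sg i) <= i.
  move=> i; rewrite /dl; case: ex_minnP => k /andP[kl _] kmin.
  rewrite inordK //; apply: kmin; by rewrite ltn_ord inord_val eqxx.
have mono : forall j j' : 'I_n.+1, j <= j' -> dl j <= dl j'.
  move=> j j' hj; rewrite leqNgt; apply/negP => lt.
  have := dmap_mono sg (ltnW lt); rewrite !P1 => hj'.
  have ejj : j = j' by apply: val_inj; apply/eqP; rewrite eqn_leq hj hj'.
  by move: lt; rewrite ejj ltnn.
exists (exist _ dl mono); split => //=.
Qed.

Lemma q_inverts : inverts_W (qfun R).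
Proof.
move=> b m s hs. case: (surj_section hs) => d [hsd hds].
exists (dclass (Sec hsd)); split.
- change (@cmp (Down R) _ _ _ (dclass (Sec hsd)) (dclass (Wmor s)) = dclass (nid (restr s))).
  rewrite dcmp. apply: dclass_eq; apply: rst_step.
  exists hds => i /=. rewrite cid_r nXm_c. apply: arr_inj. rewrite nXm_same //.
- change (@cmp (Down R) _ _ _ (dclass (Wmor s)) (dclass (Sec hsd)) = dclass (nid b)).
  rewrite dcmp W_Sec //.
Qed.


Section Homotopy.
Variables (A B : NObj R) (f f' : NHom A B).
Variable H : forall i, sval (nal f) i <= sval (nal f') i.
Hypothesis HH : forall i, nth_ f' i = cmp (nXm (H i)) (nth_ f i).
Let m := ndim A.
Let al := sval (nal f).
Let al' := sval (nal f').

Lemma plus_lem (j : 'I_m.+1) (y : 'I_(ndim B).+1) (h : al j <= y) :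
  y = al j \/ y = al' j -> Rplus (cmp (nXm h) (nth_ f j)).
Proof.
case=> e; subst y.
- rewrite nX_id cid_l; exact: nth_plus.
- rewrite (nXm_pi h (H j)) -HH; exact: nth_plus.
Qed.

Definition alk (k : nat) (i : 'I_m.+1) : 'I_(ndim B).+1 :=
  if i < k then al i else al' i.

Lemma alk_mono k (i j : 'I_m.+1) : i <= j -> alk k i <= alk k j.
Proof.
move=> h; rewrite /alk.
have m1 := dmap_mono (nal f) h. have m2 := dmap_mono (nal f') h.
have c1 := H i. have c2 := H j.
case: ifP => hi; case: ifP => hj //.
- exact: leq_trans c1 m2.
- exfalso; move: hi hj h; lia.
Qed.

Lemma alk_ge k i : al i <= alk k i.
Proof. rewrite /alk; case: ifP => _ //; exact: H. Qed.

Definition fk (k : nat) : NHom A B.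
Proof.
refine (@Build_NHom R A B (exist _ (alk k) (@alk_mono k))
          (fun i => cmp (@nXm R B _ _ (alk_ge k i)) (nth_ f i)) _ _).
- move=> i; apply: plus_lem => /=; rewrite /alk; case: ifP; auto.
- move=> i j h /=. rewrite cA nXm_c -cA -(nth_nat f h) cA nXm_c. f_equal; exact: nXm_pi.
Defined.

Lemma fk0 : fk 0 = f'.
Proof.
apply: NHom_ext => //= i. rewrite HH. apply: nXm_arr. by rewrite /alk ltn0.
Qed.

Lemma fkm : fk m.+1 = f.
Proof.
apply: NHom_ext => /= i; first by rewrite /alk ltn_ord.
transitivity (arr (cmp (@nXm R B _ _ (leqnn (al i))) (nth_ f i))); last by rewrite nX_id cid_l.
apply: nXm_arr. by rewrite /alk ltn_ord.
Qed.

Definition skf (k : nat) (i : 'I_m.+2) : 'I_m.+1 :=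
  inord (minn (if i <= k then i : nat else i.-1) m).

Lemma skf_val k i : (skf k i : nat) = minn (if i <= k then i : nat else i.-1) m.
Proof. rewrite /skf inordK //; lia. Qed.

Lemma skf_mono k (i j : 'I_m.+2) : i <= j -> skf k i <= skf k j.
Proof. move=> h; rewrite !skf_val; case: ifP; case: ifP; lia. Qed.

Definition sk k : dmap m.+1 m := exist _ (skf k) (@skf_mono k).

Definition dkf (k : nat) (i : 'I_m.+1) : 'I_m.+2 :=
  inord (if i < k then i : nat else i.+1).

Lemma dkf_val k i : (dkf k i : nat) = if i < k then i : nat else i.+1.
Proof. rewrite /dkf inordK //; have := ltn_ord i; case: ifP; lia. Qed.

Lemma dkf_mono k (i j : 'I_m.+1) : i <= j -> dkf k i <= dkf k j.
Proof. move=> h; rewrite !dkf_val; case: ifP; case: ifP; lia. Qed.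

Definition dk k : dmap m m.+1 := exist _ (dkf k) (@dkf_mono k).

Lemma sd k k' i : k <= k' <= k.+1 -> sval (sk k) (sval (dk k') i) = i.
Proof.
move=> hk; apply: val_inj => /=. rewrite skf_val dkf_val.
have := ltn_ord i. case: ifP; case: ifP; lia.
Qed.

Lemma dle k k' i : k <= k' <= k.+1 -> (sval (dk k') i <= k) = (i < k').
Proof. move=> hk /=; rewrite dkf_val. case: ifP; lia. Qed.

Definition gam (k : nat) (i : 'I_m.+2) : 'I_(ndim B).+1 :=
  if i <= k then al (skf k i) else al' (skf k i).

Lemma gam_mono k (i j : 'I_m.+2) : i <= j -> gam k i <= gam k j.
Proof.
move=> h; rewrite /gam.
have hs := skf_mono k h.
have m1 := dmap_mono (nal f) hs. have m2 := dmap_mono (nal f') hs.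
have c1 := H (skf k j).
case: ifP => hi; case: ifP => hj //.
- exact: leq_trans m1 c1.
- exfalso; move: hi hj h; lia.
Qed.

Lemma gam_ge k i : al (skf k i) <= gam k i.
Proof. rewrite /gam; case: ifP => _ //; exact: H. Qed.

Definition Gam (k : nat) : NHom (restr (sk k)) B.
Proof.
refine (@Build_NHom R (restr (sk k)) B (exist _ (gam k) (@gam_mono k))
          (fun i => cmp (@nXm R B _ _ (gam_ge k i)) (nth_ f (skf k i))) _ _).
- move=> i; apply: plus_lem => /=; rewrite /gam; case: ifP; auto.
- move=> i j h /=. rewrite cA nXm_c -cA -(nth_nat f) cA nXm_c; f_equal; exact: nXm_pi.
Defined.

Lemma Gam_D k k' (hk : k <= k' <= k.+1) :
  ncomp (Gam k) (Sec (fun i => sd i hk)) = fk k'.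
Proof.
have ev : forall i, gam k (dkf k' i) = alk k' i.
  move=> i; rewrite /gam /alk.
  have := dle i hk; rewrite /= => ->.
  have := sd i hk; rewrite /= => ->. done.
apply: NHom_ext => //= i.
rewrite -cA -(nth_nat f) cA nXm_c. apply: nXm_arr. exact: ev.
Qed.

End Homotopy.


Section Uni.
Variables (E : Cat) (hE : is_category E) (G : Functor (intN R) E).
Hypothesis hG : is_functor G.
Hypothesis hW : inverts_W G.

Lemma Eid_l (x y : E) (g : hom x y) : cmp (idm y) g = g.
Proof. by case: hE => l _; apply l. Qed.
Lemma Eid_r (x y : E) (g : hom x y) : cmp g (idm x) = g.
Proof. by case: hE => _ [r _]; apply r. Qed.
Lemma EA (x y z w : E) (g1 : hom x y) (g2 : hom y z) (g3 : hom z w) :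
  cmp g3 (cmp g2 g1) = cmp (cmp g3 g2) g1.
Proof. by case: hE => _ [_ a]; apply a. Qed.
Lemma Gid (a : NObj R) : fmap G (nid a) = idm (G a).
Proof. exact: (proj1 hG a). Qed.
Lemma Gcomp (a b c : NObj R) (g : NHom b c) (f : NHom a b) :
  fmap G (ncomp g f) = cmp (fmap G g) (fmap G f).
Proof. exact: (proj2 hG a b c g f). Qed.

Lemma G_nle (a b : NObj R) (f f' : NHom a b) : nle f f' -> fmap G f = fmap G f'.
Proof.
case=> H HH.
have step : forall k, fmap G (fk HH k) = fmap G (fk HH k.+1).
  move=> k.
  have h1 : k <= k <= k.+1 by rewrite leqnn leqnSn.
  have h2 : k <= k.+1 <= k.+1 by rewrite leqnn leqnSn.
  rewrite -(Gam_D HH h1) -(Gam_D HH h2) !Gcomp. congr cmp.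
  have surj : dsurj (sk a k).
    move=> j; exists (sval (dk a k) j); exact: (sd j h1).
  case: (hW surj) => v [hv _].
  have key : forall D : NHom a (restr (sk a k)), ncomp (Wmor (sk a k)) D = nid a ->
      fmap G D = cmp v (idm (G a)).
    move=> D hD. by rewrite -[fmap G D]Eid_l -hv -EA -Gcomp hD Gid.
  by rewrite !key // W_Sec.
have all : forall k, fmap G (fk HH k) = fmap G (fk HH 0).
  elim=> [//|k IH]; by rewrite -step.
by have := all (ndim a).+1; rewrite (fkm HH) (fk0 HH).
Qed.

Lemma G_cls (a b : NObj R) (f f' : NHom a b) : ncls f f' -> fmap G f = fmap G f'.
Proof.
elim=> [x y Hxy|x|x y _ IH|x y z _ IH1 _ IH2] //.
- exact: G_nle.
- by rewrite IH1 IH2.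
Qed.
End Uni.

End S.

Theorem proposition6p3 (R : Reedy) :
  is_category (intN R) /\ is_category (Down R) /\ is_functor (qfun R) /\
  inverts_W (qfun R) /\
  (forall (E : Cat), is_category E ->
   forall G : Functor (intN R) E, is_functor G -> inverts_W G ->
   exists H : Functor (Down R) E,
     is_functor H /\ functor_eq G (fcomp H (qfun R)) /\
     forall H' : Functor (Down R) E,
       is_functor H' -> functor_eq G (fcomp H' (qfun R)) -> functor_eq H H').
Proof.
split; first exact: intN_cat.
split; first exact: Down_cat.
split; first exact: q_functor.
split; first exact: q_inverts.
move=> E hE G hG hW.
exists (@Build_Functor (Down R) E (fun a => G a) (fun a b S => fmap G (drep S))).
split; [split|split].
- move=> x /=. by rewrite -(G_cls hE hG hW (drep_dclass (nid x))) (Gid hG).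
- move=> x y z g f /=.
  by rewrite -(G_cls hE hG hW (drep_dclass _)) (Gcomp hG).
- move=> x y f /=. by rewrite -(G_cls hE hG hW (drep_dclass f)).
- move=> H' hH' eq x y S /=. have := eq x y (drep S). by rewrite /= drepK.
Qed.
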